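(* For every integer $h\ge 0$, the generating function $M^{\le h}(z)=\sum_{n\ge0} m_{n,h} z^n$, where $m_{n,h}$ is the number of Motzkin paths of length $n$ and height at most $h$, satisfies $$M^{\le h}(z)=(1+v+v^2)\,\frac{1-v^{2h+2}}{1-v^{2h+4}},$$ and the generating function $N^{\le h}(z)=\sum_{n\ge0} n_{n,h} z^n$, where $n_{n,h}$ is the number of Motzkin paths of length $n$ and height at most $h$ having no horizontal step on level $h$, satisfies $$N^{\le h}(z)=(1+v+v^2)\,\frac{1-v^{2h+1}}{1-v^{2h+3}}.$$ Both identities hold as identities of formal power series in $z$.
   Context: A Motzkin path of length $n$ is a sequence of $n$ steps, each an up-step $(1,1)$, a down-step $(1,-1)$ or a horizontal step $(1,0)$, starting at $(0,0)$, ending at $(n,0)$, and never going below the $x$-axis. Its height is the maximal $y$-coordinate reached. A horizontal step on level $j$ is a horizontal step from $(x,j)$ to $(x+1,j)$. Throughout, $v=v(z)=\frac{1-z-\sqrt{1-2z-3z^2}}{2z}=z+z^2+\cdots$ denotes the formal power series with $v(0)=0$ satisfying $z=\frac{v}{1+v+v^2}$. *)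

(* Defs.v *)
From HB Require Import structures.
From mathcomp Require Import all_boot all_order all_algebra.
Set Implicit Arguments. Unset Strict Implicit. Unset Printing Implicit Defensive.
Import Order.TTheory GRing.Theory Num.Theory.
Local Open Scope ring_scope.

Inductive step := Up | Down | Flat.

Definition step_code (s : step) : 'I_3 :=
  match s with Up => @Ordinal 3 0 isT | Down => @Ordinal 3 1 isT | Flat => @Ordinal 3 2 isT end.
Definition step_decode (i : 'I_3) : step :=
  match val i with 0 => Up | 1 => Down | _ => Flat end.
Lemma step_codeK : cancel step_code step_decode.
Proof. by case. Qed.
HB.instance Definition _ := Finite.copy step (can_type step_codeK).

Definition delta (s : step) : int :=
  match s with Up => 1 | Down => -1 | Flat => 0 end.

Definition levels (p : seq step) : seq int :=
  scanl (fun y s => y + delta s) 0 p.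

(** y-coordinates of the starting points of the steps of p *)
Definition start_levels (p : seq step) : seq int := belast 0 (levels p).

Definition is_motzkin (p : seq step) : bool :=
  all (fun y => 0 <= y) (levels p) && (last 0 (levels p) == 0).

Definition height_le (h : nat) (p : seq step) : bool :=
  all (fun y => y <= h%:Z) (levels p).

Definition has_flat_on (j : nat) (p : seq step) : bool :=
  has (fun q : int * step => (q.1 == j%:Z) && (q.2 == Flat)) (zip (start_levels p) p).

Definition m_nh (n h : nat) : nat :=
  #|[pred p : n.-tuple step | is_motzkin p && height_le h p]|.
Definition n_nh (n h : nat) : nat :=
  #|[pred p : n.-tuple step | [&& is_motzkin p, height_le h p & ~~ has_flat_on h p]]|.

Definition fps := nat -> rat.

Definition fps_const (c : rat) : fps := fun n => if n is 0 then c else 0.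
Definition fps_one : fps := fps_const 1.
Definition fps_z : fps := fun n => if n == 1%N then 1 else 0.
Definition fps_add (a b : fps) : fps := fun n => a n + b n.
Definition fps_sub (a b : fps) : fps := fun n => a n - b n.
Definition fps_mul (a b : fps) : fps :=
  fun n => \sum_(i < n.+1) a i * b (n - i)%N.
Definition fps_pow (a : fps) (k : nat) : fps := iter k (fps_mul a) fps_one.

(** multiplicative inverse (meaningful when a 0 != 0):
    b 0 = (a 0)^-1,  b n = -(a 0)^-1 * \sum_{k=1}^{n} a k * b (n-k). *)
Fixpoint fps_inv_seq (a : fps) (n : nat) : seq rat :=
  match n with
  | 0 => [:: (a 0%N)^-1]
  | n'.+1 => let s := fps_inv_seq a n' in
      rcons s (- (a 0%N)^-1 * \sum_(k < n'.+1) a k.+1 * nth 0 s (n' - k)%N)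
  end.
Definition fps_inv (a : fps) : fps := fun n => nth 0 (fps_inv_seq a n) n.
Definition fps_div (a b : fps) : fps := fps_mul a (fps_inv b).

Definition Mle (h : nat) : fps := fun n => (m_nh n h)%:R.
Definition Nle (h : nat) : fps := fun n => (n_nh n h)%:R.

Definition qv (v : fps) : fps := fps_add (fps_add fps_one v) (fps_pow v 2).

(* Main.v *)
Require Import Defs.
From mathcomp Require Import all_boot all_order all_algebra.
From mathcomp Require Import zify.
From Stdlib Require Import Ring FunctionalExtensionality.
Set Implicit Arguments. Unset Strict Implicit. Unset Printing Implicit Defensive.
Import Order.TTheory GRing.Theory Num.Theory.
Local Open Scope ring_scope.

Definition fps0 : fps := fun _ => 0.
Definition fps_opp (a : fps) : fps := fun n => - a n.

Definition tr (n : nat) (a : fps) : {poly rat} := \poly_(i < n.+1) a i.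

Lemma trE n a i : (i <= n)%N -> (tr n a)`_i = a i.
Proof. by move=> hi; rewrite coef_poly ltnS hi. Qed.

Lemma mulE m n a b : (m <= n)%N -> fps_mul a b m = (tr n a * tr n b)`_m.
Proof.
move=> hm; rewrite coefM /fps_mul; apply: eq_bigr => i _.
have hi := ltn_ord i.
rewrite !trE //; lia.
Qed.

Lemma fps_mulC a b : fps_mul a b = fps_mul b a.
Proof.
apply: functional_extensionality => n.
by rewrite (mulE _ _ (leqnn n)) (mulE _ _ (leqnn n)) mulrC.
Qed.

Lemma fps_mulA a b c : fps_mul a (fps_mul b c) = fps_mul (fps_mul a b) c.
Proof.
apply: functional_extensionality => n.
transitivity ((tr n a * (tr n b * tr n c))`_n).
  rewrite coefM /fps_mul; apply: eq_bigr => i _.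
  have hi := ltn_ord i.
  by rewrite trE // -(mulE _ _ (leq_subr i n)).
rewrite mulrA.
rewrite [RHS]/fps_mul coefM; apply: eq_bigr => i _.
have hi := ltn_ord i.
by rewrite [X in _ * X]trE ?leq_subr // -(mulE _ _ (_ : (i <= n)%N)).
Qed.

Lemma fps_mul1 a : fps_mul fps_one a = a.
Proof.
apply: functional_extensionality => n.
rewrite /fps_mul big_ord_recl /= subn0 mul1r big1 ?addr0 // => i _.
by rewrite mul0r.
Qed.

Lemma fps_mulDl a b c : fps_mul (fps_add a b) c = fps_add (fps_mul a c) (fps_mul b c).
Proof.
apply: functional_extensionality => n.
by rewrite /fps_mul /fps_add -big_split /=; apply: eq_bigr => i _; rewrite mulrDl.
Qed.

Lemma fps_rt : ring_theory fps0 fps_one fps_add fps_mul fps_sub fps_opp (@eq fps).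
Proof.
split.
- move=> x; apply: functional_extensionality => n; by rewrite /fps_add /fps0 add0r.
- move=> x y; apply: functional_extensionality => n; by rewrite /fps_add addrC.
- move=> x y z; apply: functional_extensionality => n; by rewrite /fps_add addrA.
- exact: fps_mul1.
- exact: fps_mulC.
- exact: fps_mulA.
- exact: fps_mulDl.
- by [].
- move=> x; apply: functional_extensionality => n; by rewrite /fps_add /fps_opp /fps0 subrr.
Qed.

Add Ring fpsR : fps_rt.

Lemma powS a k : fps_pow a k.+1 = fps_mul a (fps_pow a k).
Proof. by []. Qed.

Lemma pow0 a : fps_pow a 0 = fps_one.
Proof. by []. Qed.

Lemma powD a m n : fps_pow a (m + n) = fps_mul (fps_pow a m) (fps_pow a n).
Proof.
elim: m => [|m IH]; first by rewrite add0n pow0; ring.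
by rewrite addSn !powS IH; ring.
Qed.

Lemma mul_coef0 a b : fps_mul a b 0 = a 0 * b 0.
Proof. by rewrite /fps_mul big_ord1. Qed.

Lemma pow_coef0 v k : v 0%N = 0 -> fps_pow v k.+1 0 = 0.
Proof. by move=> h0; rewrite powS mul_coef0 h0 mul0r. Qed.

Lemma inv_seq_size a n : size (fps_inv_seq a n) = n.+1.
Proof. by elim: n => //= n IH; rewrite size_rcons IH. Qed.

Lemma inv_seqS a n : fps_inv_seq a n.+1 =
  rcons (fps_inv_seq a n) (- (a 0%N)^-1 * \sum_(k < n.+1) a k.+1 * nth 0 (fps_inv_seq a n) (n - k)%N).
Proof. by []. Qed.

Lemma inv_seq_nth a n k : (k <= n)%N -> nth 0 (fps_inv_seq a n) k = fps_inv a k.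
Proof.
elim: n k => [|n IH] k hk.
  by have -> : k = 0%N by lia.
case: (eqVneq k n.+1) => [->//|hne].
rewrite inv_seqS nth_rcons inv_seq_size ifT; last by lia.
by apply: IH; lia.
Qed.

Lemma fps_invS a n : fps_inv a n.+1 = - (a 0%N)^-1 * \sum_(k < n.+1) a k.+1 * fps_inv a (n - k)%N.
Proof.
rewrite {1}/fps_inv inv_seqS nth_rcons inv_seq_size ltnn eqxx.
congr (_ * _); apply: eq_bigr => k _; by rewrite inv_seq_nth // leq_subr.
Qed.

Lemma fps_mulV a : a 0%N != 0 -> fps_mul a (fps_inv a) = fps_one.
Proof.
move=> a0; apply: functional_extensionality => n.
case: n => [|n].
  by rewrite mul_coef0 /fps_inv /= mulfV.
rewrite /fps_mul big_ord_recl /= subn0 fps_invS.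
rewrite mulrA mulrN mulfV // mulN1r.
rewrite (eq_bigr (fun k : 'I_n.+1 => a k.+1 * fps_inv a (n - k)%N)); first by rewrite addNr.
by move=> k _.
Qed.

Lemma zmul0 X : fps_mul fps_z X 0 = 0.
Proof. by rewrite mul_coef0 mul0r. Qed.

Lemma zmulS X n : fps_mul fps_z X n.+1 = X n.
Proof.
rewrite /fps_mul big_ord_recl big_ord_recl /= mul0r add0r mul1r.
have -> : (n.+1 - bump 0 0)%N = n by rewrite /bump; lia.
by rewrite big1 ?addr0 // => i _; rewrite mul0r.
Qed.

Fixpoint ok (b : bool) (h : nat) (i : int) (p : seq step) : bool :=
  match p with
  | [::] => i == 0
  | s :: p' => [&& 0 <= i + delta s, i + delta s <= h%:Z,
                   (s != Flat) || b || (i != h%:Z) & ok b h (i + delta s) p']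
  end.

Lemma okE b h i p : ok b h i p =
  [&& all (fun y => 0 <= y) (scanl (fun y s => y + delta s) i p),
      all (fun y => y <= h%:Z) (scanl (fun y s => y + delta s) i p),
      last i (scanl (fun y s => y + delta s) i p) == 0 &
      b || ~~ has (fun q : int * step => (q.1 == h%:Z) && (q.2 == Flat))
             (zip (belast i (scanl (fun y s => y + delta s) i p)) p)].
Proof.
elim: p i => [|s p IH] i /=; first by case: b; rewrite ?andbT.
rewrite IH.
move: (all _ (scanl _ (i + delta s) p)) (all (fun y => y <= h%:Z) (scanl _ (i + delta s) p)) (last _ _ == 0) (has _ _) => A B C D.
by clear IH; case: b; case: (s == Flat); case: (i == h%:Z); case: (0 <= i + delta s); case: (i + delta s <= h%:Z); case: A; case: B; case: C; case: D.
Qed.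

Lemma sum_step (F : step -> nat) : (\sum_(s : step) F s = F Up + F Down + F Flat)%N.
Proof.
rewrite (bigD1 Up) //= (bigD1 Down) //= (bigD1 Flat) //= big1 ?addn0 ?addnA //.
by case.
Qed.

Lemma sum_tupleS n (F : n.+1.-tuple step -> nat) :
  (\sum_(t : n.+1.-tuple step) F t = \sum_(s : step) \sum_(t : n.-tuple step) F [tuple of s :: t])%N.
Proof.
rewrite pair_bigA /=.
rewrite (reindex (fun u : step * n.-tuple step => [tuple of u.1 :: u.2])) //=.
exists (fun t : n.+1.-tuple step => (thead t, [tuple of behead t])).
  move=> [x t] _ /=; rewrite theadE; congr pair; exact: val_inj.
by move=> t _ /=; rewrite -tuple_eta.
Qed.

Definition C b h n i := #|[pred p : n.-tuple step | ok b h i p]|.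

Lemma C_sum b h n i : C b h n i = (\sum_(t : n.-tuple step) ok b h i t)%N.
Proof. by rewrite /C -sum1_card big_mkcond /=; apply: eq_bigr => t _; rewrite inE; case: ok. Qed.

Lemma C0 b h i : C b h 0 i = (i == 0).
Proof.
rewrite C_sum (big_pred1 [tuple]) //.
by move=> t /=; apply/esym/eqP; exact: tuple0.
Qed.

Lemma CS b h n i : C b h n.+1 i = (\sum_(s : step)
  (if [&& (0 <= i + delta s)%R, (i + delta s <= h%:Z)%R & (s != Flat) || b || (i != h%:Z)]
   then C b h n (i + delta s)%R else 0))%N.
Proof.
rewrite C_sum sum_tupleS; apply: eq_bigr => s _.
rewrite /=.
rewrite (eq_bigr (fun t : n.-tuple step => ([&& (0 <= i + delta s)%R, (i + delta s <= h%:Z)%R & (s != Flat) || b || (i != h%:Z)] && ok b h (i + delta s) t) : nat)); last by move=> t _; rewrite !andbA.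
case: [&& _, _ & _]; first by rewrite C_sum.
by rewrite big1.
Qed.

Lemma CSn b h n (i : nat) : (i <= h)%N -> C b h n.+1 i =
  ((if (i < h)%N then C b h n (i.+1)%:Z else 0) +
   (if (0 < i)%N then C b h n (i.-1)%:Z else 0) +
   (if b || (i != h) then C b h n i else 0))%N.
Proof.
move=> hih; rewrite CS sum_step /=.
have -> : i%:Z + 1 = (i.+1)%:Z by lia.
have -> : i%:Z + 0 = i%:Z by lia.
congr (_ + _ + _);
  rewrite ?andbT; case: ifPn => H1; try case: ifPn => H2; rewrite //; try (congr (C _ _ _ _); lia); exfalso; lia.
Qed.

Lemma m_C n h : m_nh n h = C true h n 0.
Proof.
apply: eq_card => p; rewrite !inE okE /is_motzkin /height_le /levels /=.
by case: (all _ _); case: (all _ _); case: (_ == _).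
Qed.

Lemma n_C n h : n_nh n h = C false h n 0.
Proof.
apply: eq_card => p; rewrite !inE okE /is_motzkin /height_le /has_flat_on /start_levels /levels /=.
by case: (all _ _); case: (all _ _); case: (_ == _).
Qed.

Lemma close (X Y k D W : fps) : fps_mul D W = fps_one ->
  fps_sub X Y = fps_mul k (fps_sub (fps_mul D W) fps_one) -> X = Y.
Proof.
move=> hDW; rewrite hDW => H.
transitivity (fps_add (fps_sub X Y) Y); first by ring.
rewrite H; ring.
Qed.

Lemma mul_cancel (a X Y : fps) : a 0%N != 0 -> fps_mul a X = fps_mul a Y -> X = Y.
Proof.
move=> a0 H.
transitivity (fps_mul (fps_mul a (fps_inv a)) X); first by rewrite fps_mulV //; ring.
transitivity (fps_mul (fps_inv a) (fps_mul a X)); first by ring.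
rewrite H.
transitivity (fps_mul (fps_mul a (fps_inv a)) Y); first by ring.
by rewrite fps_mulV //; ring.
Qed.

Lemma const0 : fps_const 0 = fps0.
Proof. by apply: functional_extensionality => -[]. Qed.

Lemma const1 : fps_const 1 = fps_one.
Proof. by []. Qed.

Lemma qv0 v : v 0%N = 0 -> qv v 0%N = 1.
Proof.
move=> h0; rewrite /qv /fps_add (pow_coef0 1 h0) h0 /fps_one /fps_const /=. by rewrite !addr0.


Qed.

Lemma qvE v : qv v = fps_add (fps_add fps_one v) (fps_mul v (fps_mul v fps_one)).
Proof. by []. Qed.

Definition e (b : bool) (h : nat) : nat := if b then (2*h+2)%N else (2*h+1)%N.
Definition Dd v b h := fps_sub fps_one (fps_pow v (e b h + 2)).
Definition Wd v b h := fps_inv (Dd v b h).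
Definition G v b h i :=
  fps_mul (fps_mul (qv v) (fps_mul (fps_pow v i) (fps_sub fps_one (fps_pow v (e b h - 2*i)%N))))
          (Wd v b h).

Lemma DW v b h : v 0%N = 0 -> fps_mul (Dd v b h) (Wd v b h) = fps_one.
Proof.
move=> h0; apply: fps_mulV.
rewrite /Dd addn2 /fps_sub (pow_coef0 _ h0) /fps_one /=.
done.
Qed.

Lemma distr_z Q c z S : fps_mul Q (fps_add c (fps_mul z S)) =
  fps_add (fps_mul Q c) (fps_mul (fps_mul Q z) S).
Proof. ring. Qed.

Lemma Geq v b h i : v 0%N = 0 -> fps_mul (qv v) fps_z = v -> (i <= h)%N ->
  G v b h i = fps_add (fps_const (if i == 0%N then 1 else 0))
    (fps_mul fps_z (fps_add (fps_add (if (i < h)%N then G v b h i.+1 else fps0)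
                                      (if (0 < i)%N then G v b h i.-1 else fps0))
                            (if b || (i != h) then G v b h i else fps0))).
Proof.
move=> h0 hqz hi.
have hDW := DW b h h0.
apply: (mul_cancel (a := qv v)); first by rewrite qv0 // oner_neq0.
rewrite distr_z hqz.
case: i hi => [|j] hi.
- rewrite /= const1.
  case: h hi hDW => [|t] _ hDW.
  + case: b hDW => hDW /=.
    * rewrite /G /Dd in hDW *.
      rewrite (_ : (e true 0 - 2 * 0)%N = 2) // in hDW *.
      rewrite (_ : (e true 0 + 2)%N = 4) // in hDW *.
      rewrite !powS !pow0 in hDW *.
      apply: (close (k := qv v) hDW); rewrite qvE; ring.
    * rewrite /G /Dd in hDW *.
      rewrite (_ : (e false 0 - 2 * 0)%N = 1) // in hDW *.
      rewrite (_ : (e false 0 + 2)%N = 3) // in hDW *.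
      rewrite !powS !pow0 in hDW *.
      apply: (close (k := qv v) hDW); rewrite qvE; ring.
  + rewrite /= orbT.
    have [s [E1 E2 E3]] : exists s, [/\ (e b t.+1 - 2*0 = s.+2)%N, (e b t.+1 - 2*1 = s)%N
                                      & (e b t.+1 + 2 = s.+4)%N].
      by exists (if b then 2*t+2 else 2*t+1)%N; clear hDW; case: b; rewrite /e /=; split; lia.
    rewrite /G /Dd in hDW *.
    rewrite E1 E2 E3 in hDW *.
    rewrite !powS !pow0 in hDW *.
    apply: (close (k := qv v) hDW); rewrite qvE; ring.
- rewrite /= const0; clear hDW.
  case: (ltngtP j.+1 h) => hjh.
  + rewrite /= orbT.
    have [s [E1 E2 E3]] : exists s, [/\ (e b h - 2*j.+1 = s.+2)%N, (e b h - 2*j.+2 = s)%N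
                                      & (e b h - 2 * j = s.+4)%N].
      by exists (if b then (2*(h - j.+2)+2) else (2*(h-j.+2)+1))%N; case: b; rewrite /e /=; split; lia.
    rewrite /G E1 E2 E3 !powS qvE; ring.
  + by exfalso; lia.
  + subst h; rewrite /= orbF.
    case: b.
    * rewrite /G (_ : (e true j.+1 - 2*j.+1)%N = 2); last by rewrite /e; lia.
      rewrite (_ : (e true j.+1 - 2*j)%N = 4); last by rewrite /e; lia.
      rewrite !powS !pow0 qvE; ring.
    * rewrite /G (_ : (e false j.+1 - 2*j.+1)%N = 1); last by rewrite /e; lia.
      rewrite (_ : (e false j.+1 - 2*j)%N = 3); last by rewrite /e; lia.
      rewrite !powS !pow0 qvE; ring.
Qed.

Lemma ifapp (c : bool) (X : fps) n : (if c then X else fps0) n = if c then X n else 0.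
Proof. by case: c. Qed.

Lemma ifnat (c : bool) (x : nat) : ((if c then x else 0%N)%:R : rat) = if c then x%:R else 0.
Proof. by case: c. Qed.

Lemma coefG v b h : v 0%N = 0 -> fps_mul (qv v) fps_z = v ->
  forall n i, (i <= h)%N -> G v b h i n = (C b h n i)%:R.
Proof.
move=> h0 hqz; elim=> [|n IH] i hi.
  rewrite Geq // /fps_add zmul0 addr0 C0 /=.
  by case: i hi.
rewrite Geq // {1}/fps_add zmulS /= add0r CSn // !natrD !ifnat.
rewrite /fps_add !ifapp.
congr (_ + _ + _); case: ifP => H //; apply: IH; lia.
Qed.

Theorem mainTheorem1 (v : fps) :
  v 0%N = 0%R ->
  fps_z = fps_div v (qv v) ->
  forall h : nat,
    Mle h = fps_mul (qv v)
              (fps_div (fps_sub fps_one (fps_pow v (2 * h + 2)))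
                       (fps_sub fps_one (fps_pow v (2 * h + 4))))
    /\
    Nle h = fps_mul (qv v)
              (fps_div (fps_sub fps_one (fps_pow v (2 * h + 1)))
                       (fps_sub fps_one (fps_pow v (2 * h + 3)))).
Proof.
move=> h0 hz h.
have hqz : fps_mul (qv v) fps_z = v.
  rewrite hz /fps_div.
  transitivity (fps_mul v (fps_mul (qv v) (fps_inv (qv v)))); first by ring.
  by rewrite fps_mulV ?qv0 ?oner_neq0 //; ring.
split; apply: functional_extensionality => n.
- rewrite /Mle m_C -(@coefG v true h h0 hqz n 0 (leq0n h)) /G /Wd /Dd /e /fps_div.
  rewrite muln0 subn0 pow0 (_ : (2 * h + 2 + 2 = 2 * h + 4)%N); last by lia.
  by apply: (f_equal (fun f : fps => f n)); ring.
- rewrite /Nle n_C -(@coefG v false h h0 hqz n 0 (leq0n h)) /G /Wd /Dd /e /fps_div.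
  rewrite muln0 subn0 pow0 (_ : (2 * h + 1 + 2 = 2 * h + 3)%N); last by lia.
  by apply: (f_equal (fun f : fps => f n)); ring.
Qed.
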